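(* Let $e:\mathbb{R}^3\to\mathbb{R}^4$ be the map $e(x_1,x_2,x_3)=(-x_1+x_2+x_3,\ x_1-x_2+x_3,\ x_1+x_2-x_3,\ x_1+x_2+x_3)$, which is an isometric embedding of $(\mathbb{R}^3,\ell_1)$ into $(\mathbb{R}^4,\ell_\infty)$. Let $X\subseteq\mathbb{R}^3$ be $1/8$-dense in $(\mathbb{R}^3,\ell_1)$. Then the open $1$-neighborhood $N_1(e(X))=\{y\in\mathbb{R}^4:\exists x\in X,\ \|y-e(x)\|_\infty<1\}$ of $e(X)$ in $(\mathbb{R}^4,\ell_\infty)$ is contractible.
   Context: $\ell_1$ metric: $\|x-y\|_1=\sum_i|x_i-y_i|$; $\ell_\infty$ metric: $\|x-y\|_\infty=\max_i|x_i-y_i|$. A subset $K$ of a metric space $Y$ is $\epsilon$-dense if for every $y\in Y$ there exists $k\in K$ with $d_Y(y,k)<\epsilon$. *)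

(* Defs.v *)
From HB Require Import structures.
From mathcomp Require Import all_boot all_order all_algebra.
From mathcomp Require Import all_classical all_reals all_analysis.
Set Implicit Arguments. Unset Strict Implicit. Unset Printing Implicit Defensive.
Import Order.TTheory GRing.Theory Num.Theory.
Import numFieldNormedType.Exports.
Local Open Scope classical_set_scope.
Local Open Scope ring_scope.

Definition l1dist (R : realType) (n : nat) (x y : 'rV[R]_n) : R :=
  \sum_(i < n) `|x ord0 i - y ord0 i|.

Definition linfdist (R : realType) (n : nat) (x y : 'rV[R]_n) : R :=
  \big[Num.max/0]_(i < n) `|x ord0 i - y ord0 i|.

Definition eps_dense (R : realType) (Y : Type) (d : Y -> Y -> R)
  (eps : R) (K : set Y) : Prop :=
  forall y : Y, exists k : Y, K k /\ d y k < eps.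

Definition emb (R : realType) (x : 'rV[R]_3) : 'rV[R]_4 :=
  let x1 := x ord0 (inord 0) in
  let x2 := x ord0 (inord 1) in
  let x3 := x ord0 (inord 2) in
  \row_(i < 4)
    (if val i == 0%N then - x1 + x2 + x3
     else if val i == 1%N then x1 - x2 + x3
     else if val i == 2%N then x1 + x2 - x3
     else x1 + x2 + x3).

Definition nbhd1 (R : realType) (X : set 'rV[R]_3) : set 'rV[R]_4 :=
  [set y | exists2 x, X x & linfdist y (emb x) < 1].

Definition contractible (R : realType) (n : nat) (U : set 'rV[R]_n) : Prop :=
  exists (p : 'rV[R]_n) (H : 'rV[R]_n * R -> 'rV[R]_n),
    [/\ U p,
        {within U `*` [set t : R | 0 <= t <= 1], continuous H},
        (forall x t, U x -> 0 <= t <= 1 -> U (H (x, t))),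
        (forall x, U x -> H (x, 0) = x) &
        (forall x, U x -> H (x, 1) = p)].

(* Main.v *)
Require Import Defs.
From HB Require Import structures.
From mathcomp Require Import all_boot all_order all_algebra.
From mathcomp Require Import all_classical all_reals all_analysis.
From mathcomp Require Import lra ring.
Import Order.TTheory GRing.Theory Num.Theory.
Import numFieldNormedType.Exports.
Local Open Scope classical_set_scope.
Local Open Scope ring_scope.

Section S.
Variable R : realType.
Definition fv (y:'rV[R]_4) := y ord0 (inord 0) + y ord0 (inord 1) + y ord0 (inord 2) - y ord0 (inord 3).
Definition nv : 'rV[R]_4 := \row_(i<4) (if val i == 3%N then -1 else 1).
Definition exc (u:R) := Num.max (u-3) 0 - Num.max (-u-3) 0.
Definition Hh (p : 'rV[R]_4 * R) : 'rV[R]_4 := Num.min 1 (2 - 2 * p.2) *: (p.1 - (Num.min 1 (2 * p.2) * (exc (fv p.1) / 4)) *: nv).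

Section C.
Variable T : topologicalType.
Lemma cB (f g : T -> R) : continuous f -> continuous g -> continuous (fun x => f x - g x).
Proof. move=> cf cg x; apply: (@continuousB R R^o T f g x); [exact: cf | exact: cg]. Qed.
Lemma cD (f g : T -> R) : continuous f -> continuous g -> continuous (fun x => f x + g x).
Proof. move=> cf cg x; apply: (@continuousD R R^o T f g x); [exact: cf | exact: cg]. Qed.
Lemma cM (f g : T -> R) : continuous f -> continuous g -> continuous (fun x => f x * g x).
Proof. move=> cf cg x; apply: (@continuousM R T f g x); [exact: cf | exact: cg]. Qed.
Lemma cN (f : T -> R) : continuous f -> continuous (fun x => - f x).
Proof. move=> cf x; apply: (@continuousN R R^o T f x); exact: cf. Qed.
Lemma cC (c : R) : continuous (fun _ : T => c).
Proof. move=> x; exact: cvg_cst. Qed.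
Lemma cmin (f g : T -> R) : continuous f -> continuous g -> continuous (fun x => Num.min (f x) (g x)).
Proof. move=> cf cg x; apply: (@continuous_min R T f g x); [exact: cf | exact: cg]. Qed.
Lemma cmax (f g : T -> R) : continuous f -> continuous g -> continuous (fun x => Num.max (f x) (g x)).
Proof. move=> cf cg x; apply: (@continuous_max R T f g x); [exact: cf | exact: cg]. Qed.
Lemma cZ (f : T -> R) (g : T -> 'rV[R]_4) : continuous f -> continuous g -> continuous (fun x => f x *: g x).
Proof. move=> cf cg x; apply: (@continuousZ R _ T f g x); [exact: cf | exact: cg]. Qed.
Lemma cBv (f g : T -> 'rV[R]_4) : continuous f -> continuous g -> continuous (fun x => f x - g x).
Proof. move=> cf cg x; apply: (@continuousB R _ T f g x); [exact: cf | exact: cg]. Qed.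
End C.

Lemma fv_cont : continuous fv.
Proof.
rewrite /fv.
apply: cB; last exact: coord_continuous.
apply: cD; last exact: coord_continuous.
apply: cD; exact: coord_continuous.
Qed.

Lemma exc_cont : continuous exc.
Proof.
rewrite /exc.
apply: cB; apply: cmax; try exact: cC.
  by apply: cB; [move=> ?; exact: cvg_id| exact: cC].
by apply: cB; [apply: cN; move=> ?; exact: cvg_id| exact: cC].
Qed.

Lemma Hh_cont : continuous Hh.
Proof.
rewrite /Hh.
apply: cZ.
  apply: cmin; first exact: cC.
  apply: cB; first exact: cC.
  apply: cM; first exact: cC.
  move=> ?; exact: cvg_snd.
apply: cBv; first by move=> ?; exact: cvg_fst.
apply: cZ; last by move=> ?; exact: cvg_cst.
apply: cM.
  apply: cmin; first exact: cC.
  apply: cM; first exact: cC.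
  move=> ?; exact: cvg_snd.
apply: cM; last exact: cC.
move=> p; apply: (@continuous_comp _ _ _ (fun p : 'rV[R]_4 * R => fv p.1) exc); last exact: exc_cont.
apply: (@continuous_comp _ _ _ fst fv); first exact: cvg_fst.
exact: fv_cont.
Qed.

Lemma ordE n k (H : (k < n.+1)%N) : Ordinal H = inord k.
Proof. by apply/val_inj; rewrite /= inordK. Qed.

Local Notation "y !! k" := (y ord0 (inord k)) (at level 2, k at level 0).

Lemma vK n (k : nat) : (k < n.+1)%N -> \val (@inord n k) = k.
Proof. exact: inordK. Qed.

Lemma embE (x : 'rV[R]_3) :
  [/\ (emb x) !! 0 = - x !! 0 + x !! 1 + x !! 2, (emb x) !! 1 = x !! 0 - x !! 1 + x !! 2,
      (emb x) !! 2 = x !! 0 + x !! 1 - x !! 2 & (emb x) !! 3 = x !! 0 + x !! 1 + x !! 2].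
Proof. by rewrite /emb !mxE !vK. Qed.

Lemma linf_lt1 (y z : 'rV[R]_4) : linfdist y z < 1 <->
  [/\ `|y !! 0 - z !! 0| < 1, `|y !! 1 - z !! 1| < 1, `|y !! 2 - z !! 2| < 1 & `|y !! 3 - z !! 3| < 1].
Proof.
rewrite /linfdist; split.
  by move/bigmax_ltP => [_ H]; split; apply: H.
move=> [h0 h1 h2 h3]; apply/bigmax_ltP; split => //.
by case=> [[|[|[|[|k]]]] Hi] _ //=; rewrite ordE.
Qed.

Lemma l1E (x y : 'rV[R]_3) : l1dist x y = `|x !! 0 - y !! 0| + `|x !! 1 - y !! 1| + `|x !! 2 - y !! 2|.
Proof.
rewrite /l1dist !big_ord_recr big_ord0 /= add0r.
have E (i : 'I_3) k : val i = k -> i = inord k by move=> <-; rewrite inord_val.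
by rewrite (E (widen_ord _ (widen_ord _ ord_max)) 0) // (E (widen_ord _ ord_max) 1) // (E ord_max 2).
Qed.


Lemma absP (a : R) : - `|a| <= a /\ a <= `|a|.
Proof. by split; [apply: lerNnormlW | rewrite ler_norm]. Qed.

Lemma ltabs (a c : R) : - c < a -> a < c -> `|a| < c.
Proof. by move=> h1 h2; rewrite ltr_norml h1 h2. Qed.

Lemma slab (X : set 'rV[R]_3) : eps_dense (@l1dist R 3) (1 / 8) X ->
  forall v : 'rV[R]_4, `|fv v| <= 3 -> nbhd1 X v.
Proof.
move=> dX v hv.
move: hv; rewrite ler_norml => /andP [hv1 hv2].
pose h0 := v !! 0 - fv v / 4. pose h1 := v !! 1 - fv v / 4.
pose h2 := v !! 2 - fv v / 4.
pose x0 : 'rV[R]_3 := \row_(j < 3) (if val j == 0%N then (h1 + h2) / 2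
   else if val j == 1%N then (h0 + h2) / 2 else (h0 + h1) / 2).
have [a0 [a1 a2]] : [/\ x0 !! 0 = (h1 + h2) / 2, x0 !! 1 = (h0 + h2) / 2 & x0 !! 2 = (h0 + h1) / 2].
  by rewrite !mxE !vK.
have [x [Xx dx]] := dX x0.
exists x => //; apply/linf_lt1.
move: dx; rewrite l1E => dx.
have [e0 e1 e2 e3] := embE x.
have [b0 c0] := absP (x0 !! 0 - x !! 0).
have [b1 c1] := absP (x0 !! 1 - x !! 1).
have [b2 c2] := absP (x0 !! 2 - x !! 2).
move: hv1 hv2; rewrite /h0 /h1 /h2 /fv in a0 a1 a2 * => hv1 hv2.
rewrite e0 e1 e2 e3.
split; apply: ltabs; lra.
Qed.

Lemma HhE y t k : (k < 4)%N -> (Hh (y, t)) !! k =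
  Num.min 1 (2 - 2 * t) * (y !! k - Num.min 1 (2 * t) * (exc (fv y) / 4) * (if k == 3%N then -1 else 1)).
Proof. by move=> hk; rewrite /Hh !mxE /= vK. Qed.

Lemma min01 (a : R) : 0 <= a -> 0 <= Num.min 1 a <= 1.
Proof.
move=> ha; have [h|h] := leP 1 a; lra.
Qed.

Lemma excP (f : R) : (3 <= f /\ exc f = f - 3) \/ (f <= -3 /\ exc f = f + 3) \/ (-3 <= f <= 3 /\ exc f = 0).
Proof.
rewrite /exc.
have [h1|h1] := leP (f - 3) 0; have [h2|h2] := leP (- f - 3) 0.
- right; right; split; [lra | ring].
- right; left; split; [lra | ring].
- left; split; [lra | ring].
- lra.
Qed.

Lemma Hh_in (X : set 'rV[R]_3) : eps_dense (@l1dist R 3) (1 / 8) X ->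
  forall y t, nbhd1 X y -> 0 <= t <= 1 -> nbhd1 X (Hh (y, t)).
Proof.
move=> dX y t [x Xx /linf_lt1 [d0 d1 d2 d3]] /andP [t0 t1].
have [e0 e1 e2 e3] := embE x.
have hm : 0 <= Num.min 1 (2 * t) <= 1 by apply: min01; lra.
have hl : 0 <= Num.min 1 (2 - 2 * t) <= 1 by apply: min01; lra.
have [ht|ht] := lerP t (1/2).
  have hl1 : Num.min 1 (2 - 2 * t) = 1 by rewrite min_l //; lra.
  exists x => //; apply/linf_lt1.
  rewrite !HhE //= hl1 !mul1r e0 e1 e2 e3.
  move: (Num.min 1 (2 * t)) hm => m hm.
  move: d0 d1 d2 d3; rewrite !ltr_norml e0 e1 e2 e3.
  move=> /andP [d0 d0'] /andP [d1 d1'] /andP [d2 d2'] /andP [d3 d3'].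
have hf : -4 < fv y < 4 by rewrite /fv; apply/andP; split; lra.
  have hE := excP (fv y).
  move: (exc (fv y)) hE => E hE.
  have hs : (0 <= E -> 0 <= m * (E / 4) <= E / 4) /\ (E <= 0 -> E / 4 <= m * (E / 4) <= 0).
    split => hE0; apply/andP; split; nra.
  move: (m * (E / 4)) hs => s hs.
  rewrite /fv in hE hf.
  split; apply/andP; split; lra.
have hm1 : Num.min 1 (2 * t) = 1 by rewrite min_l //; lra.
apply: slab => //.
have -> : fv (Hh (y, t)) = Num.min 1 (2 - 2 * t) * (fv y - exc (fv y)).
  rewrite [fv (Hh _)]/fv !HhE //= hm1 !mul1r; move: (exc (fv y)) (Num.min 1 (2 - 2 * t)) => E l; rewrite /fv; field; done.
move: (Num.min 1 (2 - 2 * t)) hl => l0 hl.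
have hE := excP (fv y).
move: (exc (fv y)) hE => E hE.
move: (fv y) hE => f hE.
rewrite ler_norml; apply/andP; split; nra.
Qed.

Lemma fv0 : fv 0 = 0.
Proof. by rewrite /fv !mxE; ring. Qed.

End S.

Theorem theorem3p2 (R : realType) (X : set 'rV[R]_3) :
  eps_dense (@l1dist R 3) (1 / 8) X ->
  contractible (nbhd1 X).
Proof.
move=> dX; exists 0, (@Hh R); split.
- by apply: slab => //; rewrite fv0 normr0.
- exact/continuous_subspaceT/Hh_cont.
- by move=> y t Uy ht; apply: Hh_in.
- move=> y _; rewrite /Hh /= mulr0 subr0 (min_l (x:=1)) ?scale1r; last lra.
  by rewrite (min_r (x:=1)) ?ler01 // mul0r scale0r subr0.
- by move=> y _; rewrite /Hh /= mulr1 subrr (min_r (x:=1)) ?ler01 // scale0r.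
Qed.
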